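(* Let $p>1$, $\alpha\in\mathbb{R}$. For each $T>0$ there exists exactly one positive solution $\psi$ of $$\psi'(t)=\psi^p(t)\ln^\alpha(\psi^2(t)+2),\qquad \lim_{t\to T}\psi(t)=+\infty.$$ Moreover, $$\psi(t)\sim\kappa_\alpha(T-t)^{-\frac1{p-1}}|\ln(T-t)|^{-\frac{\alpha}{p-1}}\quad\text{as }t\to T,\qquad \kappa_\alpha=(p-1)^{-\frac1{p-1}}\left(\frac{p-1}2\right)^{\frac{\alpha}{p-1}}.$$ *)

(* Defs.v *)
From Stdlib Require Import Reals.
From Coquelicot Require Import Coquelicot.
Open Scope R_scope.

(* Right-hand side of the ODE:  f(s) = s^p * ln^alpha(s^2 + 2), for s > 0
   (real powers via Rpower; ln(s^2+2) >= ln 2 > 0). *)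
Definition rhs (p alpha s : R) : R :=
  Rpower s p * Rpower (ln (s ^ 2 + 2)) alpha.

Definition blowup_solution (p alpha T : R) (psi : R -> R) : Prop :=
  (forall t, 0 < t < T -> 0 < psi t) /\
  (forall t, 0 < t < T -> is_derive psi t (rhs p alpha (psi t))) /\
  filterlim psi (at_left T) (Rbar_locally p_infty).

Definition kappa (p alpha : R) : R :=
  Rpower (p - 1) (- / (p - 1)) * Rpower ((p - 1) / 2) (alpha / (p - 1)).

Definition profile (p alpha T t : R) : R :=
  kappa p alpha * Rpower (T - t) (- / (p - 1))
    * Rpower (Rabs (ln (T - t))) (- alpha / (p - 1)).

(* Main.v *)
Require Import Defs.
From Stdlib Require Import Reals Lra Classical ClassicalEpsilon.
From Coquelicot Require Import Coquelicot.
Open Scope R_scope.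

Definition ell (s:R) := ln (s^2+2).
Definition gf p a s := exp (-(p * ln s + a * ln (ell s))).
Definition Fc p a s := exp ((1-p) * ln s - a * ln (ell s)) / (p-1).
Definition rr p a s := 2*a*s^2/((p-1)*(s^2+2)*ell s).

Lemma ell_pos s : 0 < ell s.
Proof. unfold ell. rewrite <- ln_1. apply ln_increasing; nra. Qed.

Lemma gf_cont p a s : 0 < s -> continuous (gf p a) s.
Proof. intros Hs. apply (ex_derive_continuous (K:=R_AbsRing) (V:=R_NormedModule)).
  pose proof (ell_pos s) as He. unfold ell in He. simpl in He.
  unfold gf, ell. auto_derive. repeat split; try lra; nra. Qed.

Lemma Fc_exp p a s : 0 < s -> exp ((1-p) * ln s - a * ln (ell s)) = s * gf p a s.
Proof. intros Hs. unfold gf.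
  replace ((1-p) * ln s - a * ln (ell s)) with (ln s + -(p*ln s + a*ln (ell s))) by ring.
  rewrite exp_plus, exp_ln; auto. Qed.

Lemma Fc_deriv p a s : 1 < p -> 0 < s -> is_derive (Fc p a) s (- gf p a s * (1 + rr p a s)).
Proof. intros Hp Hs. unfold Fc, rr. pose proof (ell_pos s) as He. unfold ell in *. simpl in He.
  auto_derive.
  - repeat split; try lra; try nra.
  - replace (s*(s*1)) with (s^2) by ring.
    replace (exp ((1 - p) * ln s + - (a * ln (ln (s^2 + 2))))) with (s * gf p a s).
    + assert (0 < ln (s^2+2)) by exact (ell_pos s). field. repeat split; try lra; nra.
    + rewrite <- Fc_exp by lra. unfold ell. f_equal.
Qed.


Lemma ballR (x e y : R) : ball x e y <-> Rabs (y - x) < e.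
Proof. reflexivity. Qed.

Lemma mono (f df : R -> R) a b : a <= b -> (forall x, a <= x <= b -> is_derive f x (df x)) ->
  (forall x, a <= x <= b -> 0 <= df x) -> f a <= f b.
Proof. intros Hab Hd Hp. destruct (Req_dec a b) as [->|Hne]; [lra|].
  destruct (MVT_cor2 f df a b) as [c [Hc1 Hc2]]; [lra| |].
  - intros c Hc. apply is_derive_Reals. auto.
  - assert (0 <= df c) by (apply Hp; lra). nra. Qed.

Lemma smono (f df : R -> R) a b : a < b -> (forall x, a <= x <= b -> is_derive f x (df x)) ->
  (forall x, a <= x <= b -> 0 < df x) -> f a < f b.
Proof. intros Hab Hd Hp.
  destruct (MVT_cor2 f df a b) as [c [Hc1 Hc2]]; [lra| |].
  - intros c Hc. apply is_derive_Reals. auto.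
  - assert (0 < df c) by (apply Hp; lra). nra. Qed.

Definition Hi p a s := RInt (gf p a) 1 s.

Lemma H_deriv p a s : 0 < s -> is_derive (Hi p a) s (gf p a s).
Proof. intros Hs. apply (is_derive_RInt (gf p a) (Hi p a) 1 s).
  - exists (mkposreal (s/2) ltac:(lra)). intros y Hy. rewrite ballR in Hy. simpl in Hy.
    unfold Hi. apply (RInt_correct (V:=R_CompleteNormedModule)), (ex_RInt_continuous (V:=R_CompleteNormedModule)). intros z Hz. apply gf_cont.
    assert (0 < Rmin 1 y). { apply Rmin_glb_lt; [lra|]. apply Rabs_def2 in Hy. lra. } lra.
  - apply gf_cont; auto. Qed.


Lemma ln_le_m1 u : 0 < u -> ln u <= u - 1.
Proof. intros Hu. pose proof (exp_ineq1_le (ln u)) as K. rewrite exp_ln in K; lra. Qed.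

Lemma ln_le_lin y d : 0 < y -> 0 < d -> ln y <= d * y + / d.
Proof. intros Hy Hd. pose proof (sqrt_lt_R0 y Hy) as Hu. set (u := sqrt y) in *.
  assert (Hyu : y = u * u) by (unfold u; rewrite sqrt_sqrt; lra).
  rewrite Hyu, ln_mult by lra. pose proof (ln_le_m1 u Hu).
  assert (Hw : d * / d = 1) by (field; lra). set (w := / d) in *.
  assert (0 < w) by (unfold w; apply Rinv_0_lt_compat; lra).
  assert (2 * u <= d * (u*u) + w).
  { apply Rmult_le_reg_l with d; [lra|]. pose proof (pow2_ge_0 (d*u-1)). rewrite Rmult_plus_distr_l, Hw. nra. }
  lra. Qed.

Lemma ell_big M : exists S, 1 <= S /\ forall s, S <= s -> M <= ell s.
Proof. exists (exp (Rabs M)). split.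
  - pose proof (exp_ineq1_le (Rabs M)). pose proof (Rabs_pos M). lra.
  - intros s Hs. pose proof (exp_ineq1_le (Rabs M)). pose proof (Rabs_pos M).
    unfold ell. apply Rle_trans with (Rabs M); [apply Rle_abs|].
    rewrite <- (ln_exp (Rabs M)) at 1. apply ln_le; [apply exp_pos|]. nra. Qed.

Lemma divabs N D e : 0 < D -> Rabs N <= e * D -> Rabs (N / D) <= e.
Proof. intros HD HN. unfold Rdiv. rewrite Rabs_mult, Rabs_inv, (Rabs_right D) by lra.
  apply Rmult_le_reg_r with D; [lra|]. rewrite Rmult_assoc, Rinv_l by lra. lra. Qed.

Lemma r_small p a e : 1 < p -> 0 < e -> exists S, 1 <= S /\ forall s, S <= s -> Rabs (rr p a s) <= e.
Proof. intros Hp He. destruct (ell_big (2 * Rabs a / ((p-1) * e))) as [S [HS1 HS]].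
  exists S. split; auto. intros s Hs. specialize (HS s Hs). unfold rr.
  pose proof (ell_pos s). pose proof (Rabs_pos a).
  apply divabs.
  - apply Rmult_lt_0_compat; [apply Rmult_lt_0_compat|]; nra.
  - rewrite !Rabs_mult. rewrite (Rabs_right 2) by lra. rewrite (Rabs_right (s^2)) by nra.
    assert (Hk : 2 * Rabs a <= (p-1) * e * ell s).
    { apply Rmult_le_compat_l with (r := (p-1)*e) in HS; [|nra].
      replace ((p - 1) * e * (2 * Rabs a / ((p - 1) * e))) with (2 * Rabs a) in HS by (field; lra). lra. }
    assert (0 <= s^2) by nra.
    assert (2 * Rabs a * s^2 <= (p-1) * e * ell s * (s^2+2)).
    { apply Rle_trans with ((p-1) * e * ell s * s^2). apply Rmult_le_compat_r; lra.
      assert (0 <= (p-1)*e*ell s) by (apply Rmult_le_pos; [nra|lra]). nra. }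
    nra. Qed.


Lemma Fc_pos p a s : 1 < p -> 0 < Fc p a s.
Proof. intros Hp. unfold Fc. apply Rdiv_lt_0_compat; [apply exp_pos|lra]. Qed.

Lemma F_to0 p a e : 1 < p -> 0 < e -> exists S, 1 <= S /\ forall s, S <= s -> Fc p a s < e.
Proof. intros Hp He.
  set (d := (p-1)/(4*(Rabs a+1))).
  pose proof (Rabs_pos a) as Ha.
  assert (Hd : 0 < d) by (unfold d; apply Rdiv_lt_0_compat; lra).
  assert (Had : 2 * Rabs a * d <= (p-1)/2).
  { unfold d. apply Rmult_le_reg_r with (4*(Rabs a + 1)); [lra|].
    field_simplify; [|lra]. nra. }
  set (C0 := Rabs a * (d * ln 3 + / d)).
  set (K := (C0 - ln (e*(p-1))) * 2 / (p-1)).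
  exists (exp (Rabs K + 1)). split.
  { pose proof (exp_ineq1_le (Rabs K + 1)). pose proof (Rabs_pos K). lra. }
  intros s Hs.
  assert (HS0 : 0 < exp (Rabs K + 1)) by apply exp_pos.
  assert (Hs0 : 0 < s) by lra.
  assert (Hls : Rabs K + 1 <= ln s).
  { rewrite <- (ln_exp (Rabs K + 1)). apply ln_le; lra. }
  pose proof (Rle_abs K) as HKa. pose proof (Rabs_pos K).
  assert (He1 : exp 1 <= s).
  { apply Rle_trans with (exp (Rabs K + 1)); auto. destruct (Req_dec (Rabs K) 0) as [E|E].
    - rewrite E, Rplus_0_l. lra.
    - left. apply exp_increasing. lra. }
  assert (Hs1 : 1 <= s) by (pose proof (exp_ineq1_le 1); lra).
  assert (Hl1 : 1 <= ell s).
  { unfold ell. rewrite <- (ln_exp 1) at 1. apply ln_le; [apply exp_pos|nra]. }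
  assert (Hll0 : 0 <= ln (ell s)). { rewrite <- ln_1. apply ln_le; lra. }
  assert (Hlu : ell s <= ln 3 + 2 * ln s).
  { unfold ell. replace (ln 3 + 2 * ln s) with (ln (3 * (s * s))).
    - assert (1 <= s*s) by nra. apply ln_le; simpl; lra.
    - rewrite !ln_mult by nra. ring. }
  pose proof (ln_le_lin (ell s) d ltac:(lra) Hd) as Hlin.
  assert (HE : (1-p) * ln s - a * ln (ell s) <= - ((p-1)/2) * ln s + C0).
  { assert (- a * ln (ell s) <= Rabs a * ln (ell s)).
    { apply Rmult_le_compat_r; auto. rewrite <- Rabs_Ropp. apply Rle_abs. }
    assert (Rabs a * ln (ell s) <= Rabs a * (d * ell s + / d)) by (apply Rmult_le_compat_l; lra).
    assert (Rabs a * (d * ell s) <= Rabs a * (d * (ln 3 + 2 * ln s))).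
    { apply Rmult_le_compat_l; auto. apply Rmult_le_compat_l; lra. }
    assert (2 * Rabs a * d * ln s <= (p-1)/2 * ln s) by (apply Rmult_le_compat_r; lra).
    unfold C0. nra. }
  assert (HE2 : - ((p-1)/2) * ln s + C0 < ln (e * (p-1))).
  { assert (K < ln s) by lra. unfold K in H0.
    apply Rmult_lt_compat_l with (r := (p-1)/2) in H0; [|lra].
    replace ((p - 1) / 2 * ((C0 - ln (e * (p - 1))) * 2 / (p - 1))) with (C0 - ln (e * (p - 1))) in H0 by (field; lra).
    lra. }
  unfold Fc. apply Rmult_lt_reg_r with (p-1); [lra|].
  unfold Rdiv. rewrite Rmult_assoc, Rinv_l by lra. rewrite Rmult_1_r.
  rewrite <- (exp_ln (e * (p-1))) by nra. apply exp_increasing. lra. Qed.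


Lemma dRplus f g x df dg : is_derive f x df -> is_derive g x dg -> is_derive (fun y => f y + g y) x (df + dg).
Proof. intros. apply (is_derive_plus f g x df dg); auto. Qed.
Lemma dRminus f g x df dg : is_derive f x df -> is_derive g x dg -> is_derive (fun y => f y - g y) x (df - dg).
Proof. intros. apply (is_derive_minus f g x df dg); auto. Qed.
Lemma dRscal k f x df : is_derive f x df -> is_derive (fun y => k * f y) x (k * df).
Proof. intros. apply (is_derive_scal f x k df); auto. Qed.
Lemma dRconst k x : is_derive (fun _ => k) x 0.
Proof. apply (is_derive_const k x). Qed.

Lemma dRext (f g : R -> R) x l : (forall t, f t = g t) -> is_derive f x l -> is_derive g x l.
Proof. intros. apply (is_derive_ext f g); auto. Qed.

Lemma abs_inv x e : Rabs x <= e -> -e <= x <= e.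
Proof. unfold Rabs; destruct (Rcase_abs x); lra. Qed.

Lemma gf_pos p a s : 0 < gf p a s.
Proof. apply exp_pos. Qed.

Lemma H_low p a : 1 < p -> exists c, 0 < c /\ forall s, 0 < s <= 1 -> Hi p a s <= Hi p a 1 + c * ln s.
Proof. intros Hp.
  set (K0 := Rabs (ln (ln 2)) + Rabs (ln (ln 3))).
  set (c := exp (-(Rabs a * K0))).
  assert (Hc : 0 < c) by apply exp_pos.
  exists c. split; auto. intros s [Hs0 Hs1].
  assert (Hl2 : 0 < ln 2) by (rewrite <- ln_1; apply ln_increasing; lra).
  assert (Hg : forall u, 0 < u <= 1 -> c * / u <= gf p a u).
  { intros u [Hu0 Hu1].
    assert (Hlu : ln u <= 0) by (rewrite <- ln_1; apply ln_le; lra).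
    assert (Hb : ln 2 <= ell u <= ln 3).
    { unfold ell. split; apply ln_le; simpl; nra. }
    assert (Hlb : ln (ln 2) <= ln (ell u) <= ln (ln 3)).
    { split; apply ln_le; lra. }
    assert (HK : Rabs (ln (ell u)) <= K0).
    { unfold K0. apply Rabs_le. pose proof (Rabs_pos (ln (ln 2))). pose proof (Rabs_pos (ln (ln 3))).
      pose proof (Rle_abs (ln (ln 3))). pose proof (Rle_abs (- ln (ln 2))) as Q. rewrite Rabs_Ropp in Q. lra. }
    assert (Hal : a * ln (ell u) <= Rabs a * K0).
    { apply Rle_trans with (Rabs (a * ln (ell u))); [apply Rle_abs|]. rewrite Rabs_mult.
      apply Rmult_le_compat_l; [apply Rabs_pos|auto]. }
    replace (c * / u) with (exp (- ln u + - (Rabs a * K0))).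
    - unfold gf. destruct (Req_dec (- ln u + - (Rabs a * K0)) (-(p * ln u + a * ln (ell u)))) as [E|E].
      + rewrite E. lra.
      + left. apply exp_increasing. nra.
    - rewrite exp_plus, exp_Ropp, exp_ln by lra. unfold c. ring. }
  assert (Hm : Hi p a s - c * ln s <= Hi p a 1 - c * ln 1).
  { apply (mono (fun x => Hi p a x - c * ln x) (fun x => gf p a x - c * / x)); [lra| |].
    - intros x Hx. apply dRminus. apply H_deriv; lra. apply dRscal.
      auto_derive; [lra| field; lra].
    - intros x Hx. pose proof (Hg x ltac:(lra)). lra. }
  rewrite ln_1 in Hm. lra. Qed.

Lemma H_bound p a : 1 < p -> exists B, forall s, 0 < s -> Hi p a s <= B.
Proof. intros Hp. destruct (r_small p a (1/2) Hp ltac:(lra)) as [S [HS1 HS]].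
  exists (Hi p a S + 2 * Fc p a S). intros s Hs. pose proof (Fc_pos p a S Hp) as FS.
  destruct (Rle_lt_dec s S) as [Hle|Hlt].
  - assert (Hi p a s <= Hi p a S).
    { apply (mono (Hi p a) (gf p a)); auto. intros x Hx; apply H_deriv; lra.
      intros x Hx; left; apply gf_pos. }
    lra.
  - assert (-(Hi p a S + 2 * Fc p a S) <= -(Hi p a s + 2 * Fc p a s)).
    { apply (mono (fun x => -(Hi p a x + 2 * Fc p a x)) (fun x => gf p a x * (1 + 2 * rr p a x))); [lra| |].
      - intros x Hx. replace (gf p a x * (1 + 2 * rr p a x)) with (0 - (gf p a x + 2 * (- gf p a x * (1 + rr p a x)))) by ring.
        apply (dRext (fun y => 0 - (Hi p a y + 2 * Fc p a y))). intros; ring.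
        apply dRminus. apply dRconst. apply dRplus. apply H_deriv; lra. apply dRscal. apply Fc_deriv; lra.
      - intros x Hx. specialize (HS x ltac:(lra)). apply abs_inv in HS. pose proof (gf_pos p a x).
        apply Rmult_le_pos; lra. }
    pose proof (Fc_pos p a s Hp) as Fs. lra. Qed.


Lemma L_ex p a : 1 < p -> exists L, (forall s, 0 < s -> Hi p a s <= L) /\
   (forall e, 0 < e -> exists s, 0 < s /\ L - e < Hi p a s).
Proof. intros Hp. destruct (H_bound p a Hp) as [B HB].
  set (Ed := fun y => exists s, 0 < s /\ y = Hi p a s).
  destruct (completeness Ed) as [L [HL1 HL2]].
  - exists B. intros y [s [Hs ->]]. auto.
  - exists (Hi p a 1). exists 1. split; auto; lra.
  - exists L. split.
    + intros s Hs. apply HL1. exists s; auto.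
    + intros e He. destruct (classic (exists s, 0 < s /\ L - e < Hi p a s)) as [K|K]; auto.
      exfalso. assert (L <= L - e); [|lra]. apply HL2. intros y [s [Hs ->]].
      destruct (Rle_lt_dec (Hi p a s) (L - e)); auto. exfalso; apply K; exists s; auto. Qed.

Definition Gspec p a (G : R -> R) :=
  (forall s, 0 < s -> 0 < G s) /\ (forall s, 0 < s -> is_derive G s (- gf p a s)) /\
  (forall e, 0 < e -> exists S, 0 < S /\ forall s, S <= s -> G s < e) /\
  (forall M, exists d, 0 < d /\ forall s, 0 < s < d -> M < G s).

Lemma G_ex p a : 1 < p -> exists G, Gspec p a G.
Proof. intros Hp. destruct (L_ex p a Hp) as [L [HL1 HL2]].
  destruct (H_low p a Hp) as [c [Hc Hlow]].
  exists (fun s => L - Hi p a s). split; [|split; [|split]].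
  - intros s Hs. assert (Hi p a s < Hi p a (s+1)).
    { apply (smono (Hi p a) (gf p a)); [lra| |]. intros x Hx; apply H_deriv; lra. intros; apply gf_pos. }
    specialize (HL1 (s+1) ltac:(lra)). lra.
  - intros s Hs. replace (- gf p a s) with (0 - gf p a s) by ring. apply dRminus. apply dRconst. apply H_deriv; auto.
  - intros e He. destruct (HL2 e He) as [s1 [Hs1 Hs1']]. exists s1. split; auto.
    intros s Hs. assert (Hi p a s1 <= Hi p a s).
    { apply (mono (Hi p a) (gf p a)); auto. intros x Hx; apply H_deriv; lra. intros; left; apply gf_pos. }
    lra.
  - intros M. set (k := (L - Hi p a 1 - M) / c).
    exists (Rmin 1 (exp k)). split.
    { apply Rmin_glb_lt; [lra|apply exp_pos]. }
    intros s [Hs0 Hs1]. pose proof (Rmin_l 1 (exp k)). pose proof (Rmin_r 1 (exp k)).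
    specialize (Hlow s ltac:(lra)).
    assert (Hk : ln s < k). { rewrite <- (ln_exp k). apply ln_increasing; lra. }
    assert (c * ln s < L - Hi p a 1 - M).
    { unfold k in Hk. apply Rmult_lt_compat_l with (r := c) in Hk; auto.
      replace (c * ((L - Hi p a 1 - M) / c)) with (L - Hi p a 1 - M) in Hk by (field; lra). auto. }
    lra. Qed.


Lemma compare p a G : 1 < p -> Gspec p a G -> forall e, 0 < e < 1 ->
  exists S, 0 < S /\ forall s, S <= s -> (1-e) * G s <= Fc p a s <= (1+e) * G s.
Proof. intros Hp [Gpos [Gder [G0 Ginf]]] e He.
  destruct (r_small p a e Hp ltac:(lra)) as [S [HS1 HS]].
  exists S. split; [lra|]. intros s Hs. split.
  - destruct (Rle_lt_dec ((1-e) * G s) (Fc p a s)) as [K|K]; auto. exfalso.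
    set (d := (1-e) * G s - Fc p a s).
    destruct (G0 d ltac:(unfold d; lra)) as [S2 [HS2 HS2']].
    set (s' := Rmax s S2).
    assert (Hm : (1-e) * G s - Fc p a s <= (1-e) * G s' - Fc p a s').
    { apply (mono (fun x => (1-e) * G x - Fc p a x) (fun x => gf p a x * (e + rr p a x))).
      - apply Rmax_l.
      - intros x Hx. replace (gf p a x * (e + rr p a x)) with ((1-e) * (- gf p a x) - (- gf p a x * (1 + rr p a x))) by ring.
        apply dRminus. apply dRscal. apply Gder; lra. apply Fc_deriv; lra.
      - intros x Hx. specialize (HS x ltac:(lra)). apply abs_inv in HS. pose proof (gf_pos p a x).
        apply Rmult_le_pos; lra. }
    assert (G s' < d) by (apply HS2'; apply Rmax_r).
    pose proof (Fc_pos p a s' Hp). pose proof (Gpos s' ltac:(pose proof (Rmax_l s S2); unfold s'; lra)).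
    assert ((1-e) * G s' <= G s') by nra. fold d in Hm. lra.
  - destruct (Rle_lt_dec (Fc p a s) ((1+e) * G s)) as [K|K]; auto. exfalso.
    set (d := Fc p a s - (1+e) * G s).
    destruct (F_to0 p a d Hp ltac:(unfold d; lra)) as [S2 [HS2 HS2']].
    set (s' := Rmax s S2).
    assert (Hm : Fc p a s - (1+e) * G s <= Fc p a s' - (1+e) * G s').
    { apply (mono (fun x => Fc p a x - (1+e) * G x) (fun x => gf p a x * (e - rr p a x))).
      - apply Rmax_l.
      - intros x Hx. replace (gf p a x * (e - rr p a x)) with ((- gf p a x * (1 + rr p a x)) - (1+e) * (- gf p a x)) by ring.
        apply dRminus. apply Fc_deriv; lra. apply dRscal. apply Gder; lra.
      - intros x Hx. specialize (HS x ltac:(lra)). apply abs_inv in HS. pose proof (gf_pos p a x).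
        apply Rmult_le_pos; lra. }
    assert (Fc p a s' < d) by (apply HS2'; apply Rmax_r).
    pose proof (Gpos s' ltac:(pose proof (Rmax_l s S2); unfold s'; lra)).
    fold d in Hm. nra. Qed.



Lemma lim_plus {T0 : Type} {FF : (T0 -> Prop) -> Prop} {HF : Filter FF} (f g : T0 -> R) a b : filterlim f FF (locally a) -> filterlim g FF (locally b) ->
  filterlim (fun x => f x + g x) FF (locally (a + b)).
Proof. intros Hf Hg. apply (filterlim_comp_2 f g Rplus Hf Hg). apply (filterlim_plus a b). Qed.

Lemma lim_mult {T0 : Type} {FF : (T0 -> Prop) -> Prop} {HF : Filter FF} (f g : T0 -> R) a b : filterlim f FF (locally a) -> filterlim g FF (locally b) ->
  filterlim (fun x => f x * g x) FF (locally (a * b)).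
Proof. intros Hf Hg. apply (filterlim_comp_2 f g Rmult Hf Hg). apply (filterlim_mult a b). Qed.

Lemma lim_const {T0 : Type} {FF : (T0 -> Prop) -> Prop} {HF : Filter FF} (c : R) : filterlim (fun _ : T0 => c) FF (locally c).
Proof. apply filterlim_const. Qed.

Lemma lim_cont {T0 : Type} {FF : (T0 -> Prop) -> Prop} {HF : Filter FF} (f : T0 -> R) (h : R -> R) a : filterlim f FF (locally a) -> continuous h a ->
  filterlim (fun x => h (f x)) FF (locally (h a)).
Proof. intros Hf Hh. apply (filterlim_comp _ _ _ f h FF (locally a) (locally (h a)) Hf Hh). Qed.

Lemma contR (h : R -> R) a : ex_derive h a -> continuous h a.
Proof. intros. apply (ex_derive_continuous (K:=R_AbsRing) (V:=R_NormedModule)). auto. Qed.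

Lemma lim_inf_eps (h : R -> R) l : (forall e, 0 < e -> exists S, forall s, S <= s -> Rabs (h s - l) < e) ->
  filterlim h (Rbar_locally p_infty) (locally l).
Proof. intros K. apply filterlim_locally. intros eps. destruct (K eps (cond_pos eps)) as [S HS].
  exists S. intros x Hx. apply ballR. apply HS. lra. Qed.

Lemma lim_FG p a G : 1 < p -> Gspec p a G ->
  filterlim (fun s => Fc p a s / G s) (Rbar_locally p_infty) (locally 1).
Proof. intros Hp HG. apply lim_inf_eps. intros e He.
  set (e' := Rmin (e/2) (1/2)).
  assert (He' : 0 < e' < 1) by (unfold e'; split; [apply Rmin_glb_lt; lra|pose proof (Rmin_r (e/2) (1/2)); lra]).
  destruct (compare p a G Hp HG e' He') as [S [HS HS']]. exists S. intros s Hs.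
  destruct HG as [Gpos _]. specialize (HS' s Hs). assert (Gs : 0 < G s) by (apply Gpos; lra).
  assert (e' < e) by (pose proof (Rmin_l (e/2) (1/2)); unfold e' in *; lra).
  apply Rle_lt_trans with e'; auto. apply Rabs_le.
  replace (Fc p a s / G s - 1) with ((Fc p a s - G s) / G s) by (field; lra).
  split.
  - apply Rmult_le_reg_r with (G s); auto. unfold Rdiv. rewrite Rmult_assoc, Rinv_l by lra. nra.
  - apply Rmult_le_reg_r with (G s); auto. unfold Rdiv. rewrite Rmult_assoc, Rinv_l by lra. nra. Qed.

Lemma lim_u3 : filterlim (fun s => / ell s) (Rbar_locally p_infty) (locally 0).
Proof. apply lim_inf_eps. intros e He. destruct (ell_big (2/e)) as [S [_ HS]]. exists S. intros s Hs.
  specialize (HS s Hs). pose proof (ell_pos s).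
  rewrite Rminus_0_r, Rabs_right by (left; apply Rinv_0_lt_compat; lra).
  apply Rmult_lt_reg_r with (ell s); auto. rewrite Rinv_l by lra.
  apply Rmult_le_compat_l with (r := e) in HS; [|lra].
  replace (e * (2/e)) with 2 in HS by (field; lra). lra. Qed.

Lemma lim_u2 : filterlim (fun s => ln (ell s) / ell s) (Rbar_locally p_infty) (locally 0).
Proof. apply lim_inf_eps. intros e He. destruct (ell_big (1 + 8/(e*e))) as [S [_ HS]]. exists S. intros s Hs.
  specialize (HS s Hs). pose proof (ell_pos s).
  assert (8/(e*e) > 0) by (apply Rdiv_lt_0_compat; nra).
  assert (Hl0 : 0 <= ln (ell s)) by (rewrite <- ln_1; apply ln_le; lra).
  pose proof (ln_le_lin (ell s) (e/2) ltac:(lra) ltac:(lra)) as Hlin.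
  rewrite Rminus_0_r, Rabs_right by (apply Rle_ge, Rdiv_le_0_compat; lra).
  apply Rmult_lt_reg_r with (ell s); auto. unfold Rdiv. rewrite Rmult_assoc, Rinv_l by lra. rewrite Rmult_1_r.
  assert (/ (e/2) < e / 2 * ell s).
  { apply Rmult_le_compat_l with (r := e*e/4) in HS; [|nra].
    replace (e * e / 4 * (1 + 8 / (e * e))) with (e*e/4 + 2) in HS by (field; lra).
    replace (/ (e/2)) with (2/e) by (field; lra).
    apply Rmult_lt_reg_l with e; auto. replace (e * (2/e)) with 2 by (field; lra). nra. }
  lra. Qed.

Lemma lim_u1 : filterlim (fun s => 2 * ln s / ell s) (Rbar_locally p_infty) (locally 1).
Proof. apply lim_inf_eps. intros e He.
  assert (Hl3 : 0 < ln 3) by (rewrite <- ln_1; apply ln_increasing; lra).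
  destruct (ell_big (2 * ln 3 / e)) as [S [HS1 HS]]. exists S. intros s Hs.
  specialize (HS s Hs). pose proof (ell_pos s).
  assert (Hs0 : 0 < s) by lra.
  assert (Hb : 2 * ln s <= ell s <= ln 3 + 2 * ln s).
  { unfold ell. replace (2 * ln s) with (ln (s * s)) by (rewrite ln_mult by lra; ring).
    rewrite <- ln_mult by nra. split; apply ln_le; simpl; nra. }
  replace (2 * ln s / ell s - 1) with (- ((ell s - 2 * ln s) / ell s)) by (field; lra).
  rewrite Rabs_Ropp, Rabs_right by (apply Rle_ge, Rdiv_le_0_compat; lra).
  apply Rmult_lt_reg_r with (ell s); auto. unfold Rdiv. rewrite Rmult_assoc, Rinv_l by lra. rewrite Rmult_1_r.
  apply Rmult_le_compat_l with (r := e) in HS; [|lra].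
  replace (e * (2 * ln 3 / e)) with (2 * ln 3) in HS by (field; lra). lra. Qed.


Lemma G_decr p a G : Gspec p a G -> forall x y, 0 < x -> x < y -> G y < G x.
Proof. intros [_ [Gd _]] x y Hx Hxy.
  assert (- G x < - G y); [|lra].
  apply (smono (fun s => - G s) (gf p a)); auto.
  - intros z Hz. replace (gf p a z) with (0 - - gf p a z) by ring.
    apply (dRext (fun s => 0 - G s)). intros; ring. apply dRminus. apply dRconst. apply Gd; lra.
  - intros; apply gf_pos. Qed.

Lemma deriv_cont f x l : is_derive f x l -> continuity_pt f x.
Proof. intros K. apply derivable_continuous_pt. exists l. apply is_derive_Reals. auto. Qed.

Lemma psi_ex p a G T : Gspec p a G -> 0 < T ->
  exists psi : R -> R, forall t, 0 < t < T -> 0 < psi t /\ G (psi t) = T - t.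
Proof. intros HG HT.
  assert (ex : forall t, exists s, 0 < t < T -> 0 < s /\ G s = T - t).
  { intros t. destruct (Rlt_dec 0 t) as [Ht0|Ht0]; [|exists 0; intros; lra].
    destruct (Rlt_dec t T) as [Ht1|Ht1]; [|exists 0; intros; lra].
    destruct HG as [Gpos [Gd [G0 Ginf]]].
    destruct (Ginf (T - t)) as [d [Hd Hd']].
    destruct (G0 (T - t) ltac:(lra)) as [S [HS HS']].
    destruct (Ranalysis5.IVT_interv (fun s => (T - t) - G s) (d/2) (S + d)) as [z [Hz1 Hz2]].
    - intros x Hx. apply (deriv_cont _ _ (0 - - gf p a x)). apply dRminus. apply dRconst. apply Gd. lra.
    - lra.
    - specialize (Hd' (d/2) ltac:(lra)). lra.
    - specialize (HS' (S+d) ltac:(lra)). lra.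
    - exists z. intros _. split; lra. }
  exists (fun t => proj1_sig (constructive_indefinite_description _ (ex t))).
  intros t Ht. destruct (constructive_indefinite_description _ (ex t)) as [s Hs]. simpl. auto. Qed.


Lemma rhs_gf p a s : rhs p a s = / gf p a s.
Proof. unfold rhs, Rpower, gf, ell. rewrite exp_Ropp, exp_plus, Rinv_inv. reflexivity. Qed.

Lemma psi_deriv p a G T psi : 1 < p -> Gspec p a G -> 0 < T ->
  (forall t, 0 < t < T -> 0 < psi t /\ G (psi t) = T - t) ->
  forall t, 0 < t < T -> is_derive psi t (rhs p a (psi t)).
Proof. intros Hp HG HT Hpsi t Ht.
  pose proof (G_decr p a G HG) as Gdec. destruct HG as [Gpos [Gd [G0 Ginf]]].
  set (Phi := fun s => T - G s).
  assert (dPhi : forall s, 0 < s -> derivable_pt_lim Phi s (gf p a s)).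
  { intros s Hs. apply is_derive_Reals. replace (gf p a s) with (0 - - gf p a s) by ring.
    apply dRminus; [apply dRconst| apply Gd; auto]. }
  assert (Hsmon : forall x y, 0 < x < T -> 0 < y < T -> x < y -> psi x < psi y).
  { intros x y Hx Hy Hxy. destruct (Rle_lt_dec (psi y) (psi x)) as [K|K]; auto. exfalso.
    destruct (Hpsi x Hx) as [Px Gx]. destruct (Hpsi y Hy) as [Py Gy].
    destruct (Req_dec (psi y) (psi x)) as [E|E].
    - rewrite E in Gy. lra.
    - assert (G (psi x) < G (psi y)) by (apply Gdec; lra). lra. }
  assert (Hmon : forall x y, 0 < x < T -> 0 < y < T -> x <= y -> psi x <= psi y).
  { intros x y Hx Hy Hxy. destruct (Req_dec x y) as [->|E]; [lra|]. left; apply Hsmon; auto; lra. }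
  set (t1 := t/2). set (t2 := (t+T)/2).
  assert (Ht1 : 0 < t1 < T) by (unfold t1; lra). assert (Ht2 : 0 < t2 < T) by (unfold t2; lra).
  assert (Prf : forall a0, psi t1 <= a0 <= psi t2 -> derivable_pt Phi a0).
  { intros a0 Ha0. exists (gf p a a0). apply dPhi. pose proof (Hpsi t1 Ht1). lra. }
  assert (Hid : forall x, t1 <= x <= t2 -> comp Phi psi x = id x).
  { intros x Hx. unfold comp, id, Phi. destruct (Hpsi x ltac:(unfold t1, t2 in *; lra)) as [_ E]. lra. }
  assert (Hc : continuity_pt psi t).
  { apply (Ranalysis5.continuity_pt_recip_interv Phi psi (psi t1) (psi t2)).
    - apply Hsmon; auto. unfold t1, t2; lra.
    - intros x y Hx Hxy Hy. unfold Phi. pose proof (Hpsi t1 Ht1). assert (G y < G x) by (apply Gdec; lra). lra.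
    - intros x Hx1 Hx2. apply Hid. unfold Phi in *. rewrite (proj2 (Hpsi t1 Ht1)) in Hx1. rewrite (proj2 (Hpsi t2 Ht2)) in Hx2. lra.
    - intros x Hx1 Hx2. unfold Phi in *. rewrite (proj2 (Hpsi t1 Ht1)) in Hx1. rewrite (proj2 (Hpsi t2 Ht2)) in Hx2.
      split; apply Hmon; auto; lra.
    - intros a0 Ha0. apply derivable_continuous_pt. apply Prf; auto.
    - unfold Phi. rewrite (proj2 (Hpsi t1 Ht1)), (proj2 (Hpsi t2 Ht2)). unfold t1, t2; lra. }
  assert (Hincr : psi t1 <= psi t <= psi t2) by (split; apply Hmon; auto; unfold t1, t2; lra).
  assert (Pt : 0 < psi t) by (apply Hpsi; auto).
  pose proof (Ranalysis5.derivable_pt_lim_recip_interv Phi psi t1 t2 t Prf Hc ltac:(unfold t1, t2; lra) ltac:(unfold t1, t2; lra) Hincr Hid) as K.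
  rewrite (derive_pt_eq_0 Phi (psi t) (gf p a (psi t)) (Prf (psi t) Hincr) (dPhi _ Pt)) in K.
  pose proof (gf_pos p a (psi t)).
  apply is_derive_Reals. rewrite rhs_gf. replace (/ gf p a (psi t)) with (1 / gf p a (psi t)) by (field; lra).
  apply K. lra. Qed.


Lemma G_inj p a G : Gspec p a G -> forall x y, 0 < x -> 0 < y -> G x = G y -> x = y.
Proof. intros HG x y Hx Hy E. destruct (Rtotal_order x y) as [L|[L|L]]; auto.
  - pose proof (G_decr p a G HG x y Hx L). lra.
  - pose proof (G_decr p a G HG y x Hy L). lra. Qed.

Lemma psi_blow p a G T psi : Gspec p a G -> 0 < T ->
  (forall t, 0 < t < T -> 0 < psi t /\ G (psi t) = T - t) ->
  filterlim psi (at_left T) (Rbar_locally p_infty).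
Proof. intros HG HT Hpsi. pose proof (G_decr p a G HG) as Gdec.
  pose proof HG as [Gpos _].
  intros P [M HM].
  set (M' := Rmax M 1). assert (HM' : 0 < M') by (unfold M'; pose proof (Rmax_r M 1); lra).
  pose proof (Gpos M' HM') as GM.
  set (d := Rmin (G M') T). assert (Hd : 0 < d) by (unfold d; apply Rmin_glb_lt; lra).
  exists (mkposreal d Hd). intros y Hy Hy'. rewrite ballR in Hy. simpl in Hy.
  apply Rabs_def2 in Hy. pose proof (Rmin_l (G M') T). pose proof (Rmin_r (G M') T).
  fold d in H, H0.
  destruct (Hpsi y ltac:(lra)) as [Py Gy].
  apply HM. destruct (Rle_lt_dec (psi y) M') as [K|K].
  - exfalso. destruct (Req_dec (psi y) M') as [E|E].
    + rewrite E in Gy. lra.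
    + assert (G M' < G (psi y)) by (apply Gdec; lra). lra.
  - pose proof (Rmax_l M 1). unfold M' in *. lra. Qed.

Lemma uniq p a G T psi : 1 < p -> Gspec p a G -> 0 < T ->
  (forall t, 0 < t < T -> 0 < psi t /\ G (psi t) = T - t) ->
  forall phi, blowup_solution p a T phi -> forall t, 0 < t < T -> phi t = psi t.
Proof. intros Hp HG HT Hpsi phi [Ppos [Pder Pblow]] t Ht.
  pose proof HG as [Gpos [Gd [G0 Ginf]]].
  assert (dk : forall x, 0 < x < T -> is_derive (fun y => G (phi y) + y) x 0).
  { intros x Hx. replace 0 with (rhs p a (phi x) * (- gf p a (phi x)) + 1).
    - apply dRplus.
      + apply (is_derive_comp G phi x (- gf p a (phi x)) (rhs p a (phi x))). apply Gd, Ppos; auto. apply Pder; auto.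
      + auto_derive; auto; ring.
    - rewrite rhs_gf. pose proof (gf_pos p a (phi x)). field. lra. }
  assert (kc1 : forall x y, 0 < x < T -> 0 < y < T -> x <= y -> G (phi x) + x = G (phi y) + y).
  { intros x y Hx Hy Hxy.
    apply Rle_antisym.
    - apply (mono (fun z => G (phi z) + z) (fun _ => 0)); auto; [intros; apply dk; lra|intros; lra].
    - enough (HH : - (G (phi x) + x) <= - (G (phi y) + y)) by lra.
      apply (mono (fun z => - (G (phi z) + z)) (fun _ => 0)); auto; [|intros; lra].
      intros z Hz. replace 0 with (0 - 0) by ring. apply (dRext (fun z => 0 - (G (phi z) + z))). intros; ring.
      apply dRminus. apply dRconst. apply dk; lra. }
  assert (kconst : forall x y, 0 < x < T -> 0 < y < T -> G (phi x) + x = G (phi y) + y).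
  { intros x y Hx Hy. destruct (Rle_lt_dec x y). apply kc1; auto. symmetry. apply kc1; auto; lra. }
  assert (kT : G (phi t) + t = T).
  { destruct (Req_dec (G (phi t) + t) T) as [E|E]; auto. exfalso.
    set (e := Rabs (G (phi t) + t - T) / 2).
    assert (He : 0 < e) by (unfold e; apply Rdiv_lt_0_compat; [apply Rabs_pos_lt; lra|lra]).
    destruct (G0 e He) as [S [HS HS']].
    assert (Hev : at_left T (fun y => S < phi y)).
    { apply Pblow. exists S. intros; auto. }
    destruct Hev as [dl Hdl].
    set (m := Rmin dl (Rmin T e)).
    assert (Hm : 0 < m) by (unfold m; repeat apply Rmin_glb_lt; try lra; apply cond_pos).
    pose proof (Rmin_l dl (Rmin T e)). pose proof (Rmin_r dl (Rmin T e)).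
    pose proof (Rmin_l T e). pose proof (Rmin_r T e). fold m in H, H0.
    set (y := T - m/2).
    assert (Hy : 0 < y < T) by (unfold y; lra).
    assert (Sy : S < phi y) by (apply Hdl; [rewrite ballR; unfold y; rewrite Rabs_left; lra| unfold y; lra]).
    pose proof (HS' (phi y) ltac:(lra)). pose proof (Gpos (phi y) (Ppos y Hy)).
    assert (Hc : G (phi t) + t = G (phi y) + y) by (apply kconst; auto).
    assert (Hlt : Rabs (G (phi y) + y - T) < 2 * e) by (apply Rabs_def1; unfold y in *; lra).
    unfold e in Hlt. rewrite Hc in Hlt. lra. }
  apply (G_inj p a G HG); [apply Ppos; auto| apply Hpsi; auto|].
  rewrite (proj2 (Hpsi t Ht)). lra. Qed.


Lemma ln_div' x y : 0 < x -> 0 < y -> ln (x / y) = ln x - ln y.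
Proof. intros. unfold Rdiv. rewrite ln_mult, ln_Rinv; try lra. apply Rinv_0_lt_compat; lra. Qed.

Lemma lnFc p a s : 1 < p -> 0 < s -> ln (Fc p a s) = ((1-p) * ln s - a * ln (ell s)) - ln (p-1).
Proof. intros. unfold Fc. rewrite ln_div', ln_exp; auto. apply exp_pos. lra. Qed.

Lemma idR p a s tau : 1 < p -> 0 < s -> 0 < tau ->
  2 * ln s / ell s + (2*a/(p-1)) * (ln (ell s) / ell s) + (2 * ln (p-1) / (p-1)) * / ell s
   + (- (2/(p-1))) * ((- ln (Fc p a s / tau)) * / ell s)
  = 2 * - ln tau / ((p-1) * ell s).
Proof. intros Hp Hs Ht. pose proof (ell_pos s). pose proof (Fc_pos p a s Hp).
  rewrite ln_div', lnFc by lra. field. lra. Qed.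

Lemma idF p a T t s : 1 < p -> 0 < s -> 0 < T - t < 1 ->
  s / profile p a T t =
  exp ((- ln (Fc p a s / (T - t)) + a * ln (2 * - ln (T - t) / ((p-1) * ell s))) / (p-1)).
Proof. intros Hp Hs Ht. pose proof (ell_pos s). pose proof (Fc_pos p a s Hp).
  assert (Hl : ln (T - t) < 0) by (rewrite <- ln_1; apply ln_increasing; lra).
  unfold profile, kappa, Rpower. rewrite Rabs_left by lra.
  rewrite <- !exp_plus.
  rewrite <- (exp_ln s) at 1 by lra. unfold Rdiv at 1. rewrite <- exp_Ropp, <- exp_plus. f_equal.
  rewrite (ln_div' (Fc p a s) (T - t)), lnFc by lra.
  rewrite (ln_div' (2 * - ln (T-t)) ((p-1) * ell s)) by (try apply Rmult_lt_0_compat; lra).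
  rewrite (ln_div' (p-1) 2) by lra.
  rewrite (ln_mult 2 (- ln (T - t))) by lra. rewrite (ln_mult (p-1) (ell s)) by lra.
  field. lra. Qed.

Lemma lim_eqv {T0 : Type} {FF : (T0 -> Prop) -> Prop} (f : T0 -> R) (a b : R) :
  a = b -> filterlim f FF (locally a) -> filterlim f FF (locally b).
Proof. intros; subst; auto. Qed.

Lemma asym p a G T psi : 1 < p -> Gspec p a G -> 0 < T ->
  (forall t, 0 < t < T -> 0 < psi t /\ G (psi t) = T - t) ->
  filterlim (fun t => psi t / profile p a T t) (at_left T) (locally 1).
Proof. intros Hp HG HT Hpsi.
  pose proof (psi_blow p a G T psi HG HT Hpsi) as Hb.
  set (Aseq := fun t => - ln (Fc p a (psi t) / G (psi t))).
  assert (HA : filterlim Aseq (at_left T) (locally 0)).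
  { pose proof (filterlim_comp _ _ _ psi (fun s => Fc p a s / G s) _ _ _ Hb (lim_FG p a G Hp HG)) as h1.
    pose proof (lim_cont _ ln 1 h1 (continuous_ln 1 ltac:(lra))) as h2.
    pose proof (lim_cont _ Ropp (ln 1) h2 (contR Ropp _ ltac:(auto_derive; auto))) as h3.
    rewrite ln_1, Ropp_0 in h3. exact h3. }
  set (Rt := fun t => 2 * - ln (T - t) / ((p-1) * ell (psi t))).
  assert (HR : filterlim Rt (at_left T) (locally 1)).
  { apply (filterlim_ext_loc (fun t => 2 * ln (psi t) / ell (psi t) + (2*a/(p-1)) * (ln (ell (psi t)) / ell (psi t))
        + (2 * ln (p-1) / (p-1)) * / ell (psi t) + (- (2/(p-1))) * (Aseq t * / ell (psi t)))).
    - exists (mkposreal T HT). intros y Hy Hy'. rewrite ballR in Hy. simpl in Hy. apply Rabs_def2 in Hy.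
      destruct (Hpsi y ltac:(lra)) as [Py Gy]. unfold Aseq, Rt. rewrite Gy. apply idR; lra.
    - pose proof (filterlim_comp _ _ _ psi _ _ _ _ Hb lim_u1) as h1.
      pose proof (filterlim_comp _ _ _ psi _ _ _ _ Hb lim_u2) as h2.
      pose proof (filterlim_comp _ _ _ psi _ _ _ _ Hb lim_u3) as h3.
      apply (lim_eqv _ (1 + (2*a/(p-1)) * 0 + (2 * ln (p-1) / (p-1)) * 0 + (- (2/(p-1))) * (0 * 0))); [ring|].
      repeat apply lim_plus; try apply lim_mult; try apply lim_const; auto.
      apply lim_mult; auto. }
  apply (filterlim_ext_loc (fun t => exp ((Aseq t + a * ln (Rt t)) / (p-1)))).
  - set (m := Rmin T 1). assert (Hm : 0 < m) by (unfold m; apply Rmin_glb_lt; lra).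
    exists (mkposreal m Hm). intros y Hy Hy'. rewrite ballR in Hy. simpl in Hy. apply Rabs_def2 in Hy.
    pose proof (Rmin_l T 1). pose proof (Rmin_r T 1). fold m in H, H0.
    destruct (Hpsi y ltac:(lra)) as [Py Gy]. unfold Aseq, Rt. rewrite Gy. symmetry. apply idF; lra.
  - apply (lim_eqv _ (exp ((0 + a * ln 1) * / (p-1)))); [rewrite ln_1; replace ((0 + a * 0) * / (p-1)) with 0 by ring; apply exp_0|].
    apply (lim_cont (fun t => (Aseq t + a * ln (Rt t)) * / (p-1)) exp).
    + apply lim_mult; [|apply lim_const]. apply lim_plus; auto. apply lim_mult; [apply lim_const|].
      apply (lim_cont Rt ln 1); auto. apply continuous_ln; lra.
    + apply continuous_exp. Qed.


Theorem lemmaA1 (p alpha : R) (hp : 1 < p) (T : R) (hT : 0 < T) :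
  exists psi : R -> R,
    blowup_solution p alpha T psi /\
    (forall phi : R -> R, blowup_solution p alpha T phi ->
       forall t, 0 < t < T -> phi t = psi t) /\
    filterlim (fun t => psi t / profile p alpha T t) (at_left T) (locally 1).
Proof.
  destruct (G_ex p alpha hp) as [G HG].
  destruct (psi_ex p alpha G T HG hT) as [psi Hpsi].
  exists psi. split; [|split].
  - split; [|split].
    + intros t Ht; apply Hpsi; auto.
    + apply (psi_deriv p alpha G T psi hp HG hT Hpsi).
    + apply (psi_blow p alpha G T psi HG hT Hpsi).
  - intros phi Hphi t Ht. apply (uniq p alpha G T psi hp HG hT Hpsi phi Hphi t Ht).
  - apply (asym p alpha G T psi hp HG hT Hpsi).
Qed.
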